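(* Let $G$ and $H$ be finite precovers of the rose $R_k$ and let $K$ be a quotient of the precover $G \sqcup H$ whose restriction to $G$ is injective. For $n$ large let $\overline{G}$ be a random degree $n$ completion of $G$. Then, with $G$, $H$, $K$ fixed and $n \to \infty$, $$\mathbb{E}\big(\mu_{K \to \overline{G}}\big) = n^{\chi_G(K)} + \mathcal{O}\big(n^{\chi_G(K) - 1}\big).$$
   Context: The rose $R_k$ has one vertex and $k$ oriented loops labelled $a_1,\ldots,a_k$. A precover of $R_k$ is a finite oriented graph with edges labelled by $a_1,\ldots,a_k$ such that each vertex has at most one outgoing and at most one incoming edge of each label; maps are label- and orientation-preserving graph morphisms. A quotient of a precover $P$ is a surjective, locally injective, label- and orientation-preserving simplicial map $P \twoheadrightarrow K$. Random degree $n$ completion: let $G'$ be the disjoint union of $G$ with $n - |V(G)|$ isolated vertices; for each $j$, choose uniformly at random (independently in $j$) a bijection from the set of vertices of $G'$ lacking an outgoing $a_j$-edge to those lacking an incoming $a_j$-edge, and add an $a_j$-edge from each $v$ to its image; the result $\overline{G}$ contains $G$ as a subgraph. $\mu_{K \to \overline{G}}$ is the number of injective maps $K \to \overline{G}$ such that the composition $G \to K \to \overline{G}$ is the natural inclusion of $G$ in $\overline{G}$. The relative Euler characteristic is $\chi_G(K) = \chi(K) - \chi(G)$, where $\chi$ denotes (number of vertices) minus (number of edges). *)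

(* Defs.v *)
From HB Require Import structures.
From mathcomp Require Import all_boot all_order all_algebra all_fingroup.
Set Implicit Arguments. Unset Strict Implicit. Unset Printing Implicit Defensive.
Import Order.TTheory GRing.Theory Num.Theory.

(* A labelled oriented graph over the rose R_k on a finite vertex type V is
   given by, for each label j : 'I_k, the relation E j u v  <=>  there is an
   a_j-edge from u to v.  (In a precover there is at most one a_j-edge from u,
   so edges are determined by (label, source, target).) *)

Definition is_precover (k : nat) (V : finType) (E : 'I_k -> rel V) : Prop :=
  (forall j u v w, E j u v -> E j u w -> v = w) /\
  (forall j u v w, E j u w -> E j v w -> u = v).

Definition num_edges (k : nat) (V : finType) (E : 'I_k -> rel V) : nat :=
  \sum_(j < k) #|[pred p : V * V | E j p.1 p.2]|.

Definition chi (k : nat) (V : finType) (E : 'I_k -> rel V) : int :=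
  (#|V|)%:Z - (num_edges E)%:Z.

Definition sum_rel (k : nat) (V1 V2 : finType) (E1 : 'I_k -> rel V1)
  (E2 : 'I_k -> rel V2) : 'I_k -> rel (V1 + V2)%type :=
  fun j x y => match x, y with
               | inl u, inl v => E1 j u v
               | inr u, inr v => E2 j u v
               | _, _ => false
               end.

Definition is_morph (k : nat) (V1 V2 : finType) (E1 : 'I_k -> rel V1)
  (E2 : 'I_k -> rel V2) (f : V1 -> V2) : Prop :=
  forall j x y, E1 j x y -> E2 j (f x) (f y).

(* quotient: morphism surjective on vertices and on edges.  (Local
   injectivity is automatic for label/orientation-preserving maps between
   precovers.) *)
Definition is_quotient (k : nat) (V1 V2 : finType) (E1 : 'I_k -> rel V1)
  (E2 : 'I_k -> rel V2) (f : V1 -> V2) : Prop :=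
  [/\ is_morph E1 E2 f,
      (forall y, exists x, f x = y) &
      (forall j y1 y2, E2 j y1 y2 ->
         exists x1 x2, [/\ E1 j x1 x2, f x1 = y1 & f x2 = y2])].

(* Vertex set of G' = G plus n - |V(G)| isolated vertices:
   (VG + 'I_(n - #|VG|)).  A degree-n completion is encoded by a k-tuple of
   permutations s of this vertex set extending the partial bijections of G:
   the a_j-edges of the completion are v -> s j v.  The random bijection from
   vertices lacking an outgoing a_j-edge to those lacking an incoming one is
   exactly the restriction of s j to the former, and this correspondence is a
   bijection, so the uniform measure on completions is the uniform measure on
   the following set. *)
Definition completions (k : nat) (VG : finType) (EG : 'I_k -> rel VG) (n : nat)
  : {set {ffun 'I_k -> {perm (VG + 'I_(n - #|VG|))%type}}} :=
  [set s : {ffun 'I_k -> {perm (VG + 'I_(n - #|VG|))%type}} | [forall j, forall u, forall v, EG j u v ==> (s j (inl u) == inl v)]].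

Definition mu (k : nat) (VG VH VK : finType) (EK : 'I_k -> rel VK)
  (q : (VG + VH)%type -> VK) (n : nat)
  (s : {ffun 'I_k -> {perm (VG + 'I_(n - #|VG|))%type}}) : nat :=
  #|[set f : {ffun VK -> (VG + 'I_(n - #|VG|))%type} |
      [&& injectiveb f,
          [forall j, forall x, forall y, EK j x y ==> (s j (f x) == f y)] &
          [forall u, f (q (inl u)) == inl u]]]|.

Definition expected_mu (k : nat) (VG VH VK : finType) (EG : 'I_k -> rel VG)
  (EK : 'I_k -> rel VK) (q : (VG + VH)%type -> VK) (n : nat) : rat :=
  ((\sum_(s in completions EG n) (mu EK q s)%:R) / (#|completions EG n|)%:R)%R.

(* Main.v *)
Require Import Defs.
From HB Require Import structures.
From mathcomp Require Import all_boot all_order all_algebra all_fingroup.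
From mathcomp Require Import ring lra zify.
Set Implicit Arguments. Unset Strict Implicit. Unset Printing Implicit Defensive.
Import Order.TTheory GRing.Theory Num.Theory.

Section Ext.
Variable T : finType.

Definition pairs (R : rel T) := [set p : T * T | R p.1 p.2].
Definition ext (R : rel T) : {set {perm T}} :=
  [set s : {perm T} | [forall u, forall v, R u v ==> (s u == v)]].
Definition pinj (R : rel T) :=
  (forall u v w, R u v -> R u w -> v = w) /\ (forall u v w, R u w -> R v w -> u = v).

Lemma card_ran R : pinj R -> #|[set w | [exists x, R x w]]| = #|pairs R|.
Proof.
move=> [_ hi].
have -> : [set w | [exists x, R x w]] = [set p.2 | p in pairs R].
  apply/setP=> w; rewrite inE; apply/existsP/imsetP.
    by move=> [x Rxw]; exists (x, w); rewrite ?inE.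
  by move=> [[x y]]; rewrite inE /= => Rxy ->; exists x.
apply: card_in_imset => [[x y] [x' y']]; rewrite !inE /= => h1 h2 e.
by rewrite -e in h2 *; rewrite (hi _ _ _ h1 h2).
Qed.

Lemma card_dom R : pinj R -> #|pairs R| <= #|T|.
Proof.
move=> [hf _].
have <- : #|[set p.1 | p in pairs R]| = #|pairs R|.
  apply: card_in_imset => [[x y] [x' y']]; rewrite !inE /= => h1 h2 e.
  by rewrite -e in h2 *; rewrite (hf _ _ _ h1 h2).
exact: max_card.
Qed.

Lemma ext_count_ind a : forall R, pinj R -> #|pairs R| = a ->
  #|ext R| = (#|T| - a)`!.
Proof.
elim: a => [|a IH] R hR hc.
  have -> : ext R = setT.
    apply/setP=> s; rewrite !inE; apply/forallP=> u; apply/forallP=> v.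
    apply/implyP=> Ruv; have : (u, v) \in pairs R by rewrite inE.
    by move: hc => /eqP; rewrite cards_eq0 => /eqP ->; rewrite inE.
  rewrite subn0 cardsT -[#|T|]cardsT -card_perm; apply: eq_card => s.
  rewrite !inE; symmetry; apply/subsetP=> x _; exact: in_setT.
have /card_gt0P [[u v] uvR] : 0 < #|pairs R| by rewrite hc.
have Ruv : R u v by move: uvR; rewrite inE.
case: (hR) => hf hi.
pose R' := fun x y => R x y && (x != u).
have hR' : pinj R'.
  split=> x y z /andP[h1 _] /andP[h2 _]; [exact: hf h1 h2 | exact: hi h1 h2].
have hc' : #|pairs R'| = a.
  have : #|pairs R| = 1 + #|pairs R :\ (u, v)| by rewrite (cardsD1 (u, v)) uvR.
  rewrite hc add1n => -[->]; apply: eq_card => -[x y]; rewrite !inE /=.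
  rewrite xpair_eqE /R'; case: (eqVneq x u) => [->|_] /=; last by rewrite andbT.
  rewrite andbF /=; case Ruy: (R u y); rewrite ?andbF //.
  by rewrite (hf _ _ _ Ruy Ruv) eqxx.
have IH' := IH R' hR' hc'.
set W := [set w | [exists x, R' x w]].
have hW : #|~: W| = #|T| - a by rewrite (cardsCs (~: W)) setCK card_ran // hc'.
have ranR' x y : R' x y -> y != v.
  move=> /andP[Rxy xu]; apply/eqP => yv; move: xu; rewrite yv in Rxy; by rewrite (hi _ _ _ Rxy Ruv) eqxx.
have nW x y w : R' x y -> w \notin W -> y != w.
  move=> h; apply: contra => /eqP <-; rewrite inE; apply/existsP; by exists x.
have key w : w \notin W ->
  #|[set s | (s \in ext R') && (s u == w)]| = #|ext R|.
  move=> wW; pose g := fun s : {perm T} => (s * tperm v w)%g.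
  have gK : involutive g by move=> s; rewrite /g -mulgA tperm2 mulg1.
  have ginj : injective g := inv_inj gK.
  have g1 s : s \in ext R -> g s \in [set s | (s \in ext R') && (s u == w)].
    rewrite !inE => /forallP hs; apply/andP; split; last first.
      by rewrite /g permM (eqP (implyP (forallP (hs u) v) Ruv)) tpermL.
    apply/forallP=> x; apply/forallP=> y; apply/implyP=> hxy.
    have := hxy; case/andP => Rxy _.
    rewrite /g permM (eqP (implyP (forallP (hs x) y) Rxy)) tpermD //.
      by rewrite eq_sym; apply: ranR' hxy.
    by rewrite eq_sym; apply: nW hxy wW.
  have g2 s : s \in [set s | (s \in ext R') && (s u == w)] -> g s \in ext R.
    rewrite !inE => /andP[/forallP hs /eqP su].
    apply/forallP=> x; apply/forallP=> y; apply/implyP=> Rxy.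
    case: (eqVneq x u) => [xu|xu].
      by rewrite xu in Rxy *; rewrite (hf _ _ _ Rxy Ruv) /g permM su tpermR.
    have hxy : R' x y by rewrite /R' Rxy xu.
    rewrite /g permM (eqP (implyP (forallP (hs x) y) hxy)) tpermD //.
      by rewrite eq_sym; apply: ranR' hxy.
    by rewrite eq_sym; apply: nW hxy wW.
  apply/eqP; rewrite eqn_leq; apply/andP; split.
    rewrite -(card_imset _ ginj); apply: subset_leq_card; apply/subsetP => t /imsetP [s hs ->]; exact: g2.
  rewrite -(card_imset _ ginj); apply: subset_leq_card; apply/subsetP => t /imsetP [s hs ->]; exact: g1.
have : #|ext R'| = #|~: W| * #|ext R|.
  rewrite -sum1_card (partition_big (fun s : {perm T} => s u) (mem (~: W))) /=; last first.
    move=> s; rewrite !inE => /forallP hs; apply/negP => /existsP [x hx].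
    have := hx; case/andP => _ xu; move: xu.
    by rewrite -(perm_inj (eqP (implyP (forallP (hs x) (s u)) hx))) eqxx.
  rewrite -sum_nat_cond_const; apply: eq_big => [w|w wW]; first by rewrite inE.
  rewrite -(key w); last by rewrite -in_setC.
  by rewrite -sum1_card; apply: eq_bigl => s; rewrite inE.
rewrite IH' hW.
have hpos : 0 < #|T| - a.
  by rewrite subn_gt0; have := card_dom hR; rewrite hc.
move=> h; apply/eqP; rewrite -(eqn_pmul2l hpos) -h subnS.
by rewrite -[in X in X`!](prednK hpos) factS prednK.
Qed.

Lemma ext_count R : pinj R -> #|ext R| = (#|T| - #|pairs R|)`!.
Proof. by move=> h; apply: ext_count_ind. Qed.
End Ext.

Lemma card_V0 (VG VK : finType) (M : nat) (h : VG -> VK) (hinj : injective h) :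
  0 < M ->
  #|[set f : {ffun VK -> (VG + 'I_M)%type} | injectiveb f && [forall u, f (h u) == inl u]]|
  = M ^_ (#|VK| - #|VG|).
Proof.
move=> hM.
set T := (VG + 'I_M)%type.
pose t0 : T := inr (Ordinal hM).
pose D := ~: [set h u | u in VG].
pose DT := {x | x \in D}.
have cDT : #|{: DT}| = #|VK| - #|VG|.
  rewrite card_sig -(card_imset _ hinj).
  have := cardsCs (~: [set h u | u in VG]); rewrite setCK => <-.
  by apply: eq_card => x; rewrite !inE.
pose Rg := mem (codom (@inr VG 'I_M)).
have cRg : #|Rg| = M by rewrite card_codom ?card_ord //; move=> i j [].
pose IG := [set g : {ffun DT -> T} in ffun_on Rg | injectiveb g].
have cIG : #|IG| = M ^_ (#|VK| - #|VG|) by rewrite /IG card_inj_ffuns_on cDT cRg.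
rewrite -cIG.
set V0 := [set f : {ffun VK -> T} | _].
have split x : (exists u, x = h u) \/ (exists d : DT, x = val d).
  case: (boolP (x \in D)) => hx; first by right; exists (exist _ x hx).
  left; move: hx; rewrite inE negbK => /imsetP [u _ ->]; by exists u.
pose Psi := fun f : {ffun VK -> T} => ([ffun d : DT => f (val d)] : {ffun DT -> T}).
pose Phi := fun g : {ffun DT -> T} => ([ffun x => if [pick u | h u == x] is Some u then inl u
   else (if insub x is Some d then g d else t0)] : {ffun VK -> T}).
have Phih g u : Phi g (h u) = inl u.
  rewrite ffunE; case: pickP => [u' /eqP /hinj -> //|none].
  by have := none u; rewrite eqxx.
have Phid g (d : DT) : Phi g (val d) = g d.
  rewrite ffunE; case: pickP => [u' /eqP hu'|_]; last by rewrite valK.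
  by have := valP d; rewrite inE -hu' imset_f.
have PsiPhi g : Psi (Phi g) = g by apply/ffunP => d; rewrite ffunE Phid.
have V0f f : f \in V0 -> injective f /\ forall u, f (h u) = inl u.
  rewrite inE => /andP [/injectiveP fi /forallP fh]; split => // u; exact/eqP.
apply/eqP; rewrite eqn_leq; apply/andP; split.
- have Psiinj : {in V0 &, injective Psi}.
    move=> f f' /V0f [fi fh] /V0f [fi' fh'] e; apply/ffunP => x.
    case: (split x) => [[u ->]|[d ->]]; first by rewrite fh fh'.
    by have := congr1 (fun g : {ffun DT -> T} => g d) e; rewrite !ffunE.
  rewrite -(card_in_imset Psiinj); apply: subset_leq_card; apply/subsetP => g /imsetP [f hf ->].
  have [fi fh] := V0f f hf.
  rewrite inE; apply/andP; split.
    apply/ffun_onP => d; rewrite ffunE.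
    case e: (f (val d)) => [u|i]; last by apply: codom_f.
    have := valP d; rewrite -fh in e; rewrite (fi _ _ e) inE imset_f //.
  apply/injectiveP => d d'; rewrite !ffunE => /fi; exact: val_inj.
- have Phiinj : injective Phi by apply: (can_inj PsiPhi).
  rewrite -(card_imset _ Phiinj); apply: subset_leq_card; apply/subsetP => f /imsetP [g hg ->].
  move: hg; rewrite inE => /andP [/ffun_onP gR /injectiveP gi].
  rewrite inE; apply/andP; split; last by apply/forallP => u; rewrite Phih.
  apply/injectiveP => x y.
  case: (split x) => [[u ->]|[d ->]]; case: (split y) => [[u' ->]|[d' ->]].
  + by rewrite !Phih => -[->].
  + rewrite Phih Phid => e; have := gR d'; rewrite -e => /codomP [i] //.
  + rewrite Phih Phid => e; have := gR d; rewrite e => /codomP [i] //.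
  + by rewrite !Phid => /gi ->.
Qed.
Section AsymSec.
Local Open Scope ring_scope.

Definition good (n A : rat) (d : nat) (P : rat) :=
  [/\ 0 <= P, P <= n ^+ d & n ^+ d - P <= d%:R * A / n * n ^+ d].

Lemma good0 n A : good n A 0 1.
Proof. by split; rewrite ?expr0 ?mul0r ?mul0r ?subrr. Qed.

Lemma good1 n A x : 0 < n -> 0 <= x -> x <= n -> n - x <= A -> good n A 1 x.
Proof.
move=> n0 x0 xn h; split; rewrite ?expr1 //.
by rewrite mul1r divfK ?gt_eqF.
Qed.

Lemma good_mul n A d1 d2 P1 P2 : 0 < n -> 0 <= A ->
  good n A d1 P1 -> good n A d2 P2 -> good n A (d1 + d2) (P1 * P2).
Proof.
move=> n0 A0 [h1 h2 h3] [h4 h5 h6]; split.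
- exact: mulr_ge0.
- by rewrite exprD; apply: ler_pM.
- rewrite exprD natrD.
  have e : n ^+ d1 * n ^+ d2 - P1 * P2 = n ^+ d1 * (n ^+ d2 - P2) + P2 * (n ^+ d1 - P1) by ring.
  rewrite e.
  have p1 : 0 <= n ^+ d1 by apply: exprn_ge0; apply: ltW.
  have p2 : 0 <= n ^+ d2 by apply: exprn_ge0; apply: ltW.
  have t1 : n ^+ d1 * (n ^+ d2 - P2) <= n ^+ d1 * (d2%:R * A / n * n ^+ d2) by apply: ler_wpM2l.
  have t2 : P2 * (n ^+ d1 - P1) <= n ^+ d2 * (d1%:R * A / n * n ^+ d1).
    apply: ler_pM => //; by rewrite subr_ge0.
  have -> : (d1%:R + d2%:R) * A / n * (n ^+ d1 * n ^+ d2) =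
     n ^+ d1 * (d2%:R * A / n * n ^+ d2) + n ^+ d2 * (d1%:R * A / n * n ^+ d1) by ring.
  by apply: lerD.
Qed.

Lemma good_ratio n A m e P1 P2 : 0 < n -> 0 <= A -> 2 * e%:R * A <= n ->
  good n A m P1 -> good n A e P2 ->
  `|P1 / P2 - n ^ (m%:Z - e%:Z)| <= (2 * (m + e)%:R * A) * n ^ (m%:Z - e%:Z - 1).
Proof.
move=> n0 A0 hn [h1 h2 h3] [h4 h5 h6].
have nz : n != 0 by rewrite gt_eqF.
have E1 : n ^ (m%:Z - e%:Z) = n ^+ m / n ^+ e.
  by rewrite expfzDr // -exprnN -!exprnP.
have E2 : n ^ (m%:Z - e%:Z - 1) = n ^+ m / n ^+ e / n.
  by rewrite expfzDr // E1 exprN1.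
rewrite E1 E2.
set a := n ^+ m in h2 h3 *; set b := n ^+ e in h5 h6 *.
have a0 : 0 <= a by apply: exprn_ge0; apply: ltW.
have b0 : 0 < b by apply: exprn_gt0.
set t := A / n.
have t0 : 0 <= t by apply: divr_ge0 => //; apply: ltW.
have h3' : a - P1 <= m%:R * t * a by rewrite /t mulrA.
have h6' : b - P2 <= e%:R * t * b by rewrite /t mulrA.
have et : e%:R * t <= 1 / 2.
  rewrite /t mulrA ler_pdivrMr //; lra.
have P2b : b <= 2 * P2.
  have : e%:R * t * b <= 1 / 2 * b by apply: ler_wpM2r => //; apply: ltW.
  lra.
have P2p : 0 < P2 by lra.
have m0 : 0 <= m%:R :> rat by [].
have e0 : 0 <= e%:R :> rat by [].
have key : `|P1 * b - a * P2| <= (m%:R + e%:R) * t * a * b.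
  have u1 : (P1 - a) * b >= - (m%:R * t * a) * b by apply: ler_wpM2r; [apply: ltW | lra].
  have u2 : a * (b - P2) <= a * (e%:R * t * b) by apply: ler_wpM2l.
  have u3 : 0 <= a * (b - P2) by apply: mulr_ge0; lra.
  have u4 : (P1 - a) * b <= 0 by apply: mulr_le0_ge0; lra.
  rewrite ler_norml; apply/andP; split.
    have -> : P1 * b - a * P2 = (P1 - a) * b + a * (b - P2) by ring.
    have : - ((m%:R + e%:R) * t * a * b) = - (m%:R * t * a) * b - a * (e%:R * t * b) by ring.
    lra.
  have -> : P1 * b - a * P2 = (P1 - a) * b + a * (b - P2) by ring.
  have : (m%:R + e%:R) * t * a * b = m%:R * t * a * b + a * (e%:R * t * b) by ring.
  have := mulr_ge0 (mulr_ge0 (mulr_ge0 m0 t0) a0) (ltW b0).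
  lra.
have -> : P1 / P2 - a / b = (P1 * b - a * P2) / (P2 * b).
  by field; apply/andP; split; rewrite gt_eqF.
rewrite normf_div (@gtr0_norm _ (P2 * b)); last exact: mulr_gt0.
rewrite ler_pdivrMr; last exact: mulr_gt0.
apply: (le_trans key).
have -> : 2 * (m + e)%:R * A * (a / b / n) * (P2 * b) = (m%:R + e%:R) * t * a * (2 * P2).
  by rewrite natrD /t; field; apply/andP; split; rewrite gt_eqF.
apply: ler_wpM2l => //.
exact: mulr_ge0 (mulr_ge0 (addr_ge0 m0 e0) t0) a0.
Qed.

End AsymSec.

Lemma card_ffam (I P : finType) (A : I -> {set P}) :
  #|[set s : {ffun I -> P} | [forall j, s j \in A j]]| = \prod_j #|A j|.
Proof.
have -> : #|[set s : {ffun I -> P} | [forall j, s j \in A j]]| = #|family (fun j => mem (A j))|.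
  by apply: eq_card => s; rewrite inE; apply/forallP/familyP.
rewrite card_family -[RHS]big_enum /= /image_mem.
by elim: (enum _) => [|x s IH] /=; rewrite ?big_nil ?big_cons ?IH.
Qed.

Lemma sum_bool (T : finType) (A : {pred T}) (P : pred T) :
  \sum_(x in A) (P x : nat) = #|[set x in A | P x]|.
Proof.
rewrite -sum1_card [RHS](eq_bigl (fun x => (x \in A) && P x)); last by move=> x; rewrite !inE.
rewrite big_mkcondr /=; apply: eq_bigr => x _; by case: (P x).
Qed.

Local Open Scope ring_scope.
Lemma good_prod (n A : rat) (I : finType) (d : I -> nat) (F : I -> rat) :
  0 < n -> 0 <= A -> (forall i, good n A (d i) (F i)) ->
  good n A (\sum_i d i)%N (\prod_i F i).
Proof.
move=> n0 A0 h.
apply: (big_ind2 (fun d P => good n A d P)); first exact: good0.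
  by move=> *; apply: good_mul.
by move=> i _; apply: h.
Qed.

Lemma good_ffact (n A a b : nat) : (0 < n)%N -> (a <= n)%N -> (b <= a)%N ->
  (n + b <= a + A)%N -> good n%:R A%:R b (a ^_ b)%:R.
Proof.
move=> n0 an ba hA.
rewrite ffact_prod natr_prod.
have := @good_prod n%:R A%:R _ (fun _ : 'I_b => 1%N) (fun i : 'I_b => (a - i)%:R).
rewrite sum1_card card_ord; apply; first by rewrite ltr0n.
  by [].
move=> i; apply: good1; rewrite ?ltr0n //.
  by rewrite ler_nat; lia.
have hi := ltn_ord i.
have h : (n <= (a - i) + A)%N by lia.
rewrite lerBlDl -natrD ler_nat; lia.
Qed.

Section Main.
Variables (k : nat) (VG VH VK : finType)
  (EG : 'I_k -> rel VG) (EH : 'I_k -> rel VH) (EK : 'I_k -> rel VK)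
  (q : (VG + VH)%type -> VK)
  (hG : is_precover EG) (hH : is_precover EH) (hK : is_precover EK)
  (hq : is_quotient (sum_rel EG EH) EK q)
  (hinj : injective (fun u => q (inl u))).

Definition gg j := #|pairs (EG j)|.
Definition kk j := #|pairs (EK j)|.

Lemma hmorph j u v : EG j u v -> EK j (q (inl u)) (q (inl v)).
Proof. by case: hq => hm _ _ h; apply: hm. Qed.

Lemma pinjK j : pinj (EK j).
Proof. by case: hK => h1 h2; split => *; [apply: h1 | apply: h2]; eauto. Qed.

Lemma pinjG j : pinj (EG j).
Proof. by case: hG => h1 h2; split => *; [apply: h1 | apply: h2]; eauto. Qed.

Lemma VGle : (#|VG| <= #|VK|)%N.
Proof. exact: leq_card hinj. Qed.

Lemma kle j : (kk j <= #|VK|)%N.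
Proof. exact: card_dom (pinjK j). Qed.

Lemma gk j : (gg j <= kk j)%N.
Proof.
rewrite /gg /kk.
have hi : injective (fun p : VG * VG => (q (inl p.1), q (inl p.2))).
  by move=> [a b] [c d] /= [/hinj -> /hinj ->].
rewrite -(card_imset _ hi); apply: subset_leq_card; apply/subsetP => p /imsetP [[u v]].
by rewrite !inE /= => /hmorph h ->.
Qed.


Lemma exp_formula n : (#|VK| + #|VG| < n)%N ->
  expected_mu EG EK q n = (((n - #|VG|) ^_ (#|VK| - #|VG|))%:R /
     (\prod_j ((n - gg j) ^_ (kk j - gg j)))%:R :> rat).
Proof.
move=> hn.
set M := (n - #|VG|)%N.
have hM : (0 < M)%N by rewrite subn_gt0; lia.
pose T := (VG + 'I_M)%type.
have cT : #|{: T}| = n by rewrite card_sum card_ord /M; lia.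
pose Gl j : rel T := fun a b => match a, b with inl u, inl v => EG j u v | _, _ => false end.
have pG j : pinj (Gl j).
  case: (pinjG j) => h1 h2.
  split.
    by move=> [u|i] [v|i'] [w|i''] //= /h1 h /h ->.
  by move=> [u|i] [v|i'] [w|i''] //= /h2 h /h ->.
have cG j : #|pairs (Gl j)| = gg j.
  have hi : injective (fun p : VG * VG => ((inl p.1 : T), (inl p.2 : T))).
    by move=> [a b] [c d] /= [-> ->].
  rewrite /gg -(card_imset _ hi); apply: eq_card => -[[a|i] [b|i']]; rewrite !inE /=;
    try (apply/esym/negbTE/negP => /imsetP [[? ?] _ //]).
  apply/idP/imsetP => [h|[[u v]]]; first by exists (a, b); rewrite ?inE.
  by rewrite inE /= => h [-> ->].
have Ceq : completions EG n = [set s : {ffun 'I_k -> {perm T}} | [forall j, s j \in ext (Gl j)]].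
  apply/setP => s; rewrite !inE; apply: eq_forallb => j; rewrite inE.
  apply/forallP/forallP => h.
    move=> [a|i]; apply/forallP => -[b|i']; apply/implyP => //= Eab.
    by have /forallP/(_ b)/implyP/(_ Eab) := h a.
  move=> u; apply/forallP => v; apply/implyP => Euv.
  by have /forallP/(_ (inl v))/implyP/(_ Euv) := h (inl u).
have cC : #|completions EG n| = (\prod_j (n - gg j)`!)%N.
  rewrite Ceq card_ffam; apply: eq_bigr => j _.
  by rewrite ext_count // cT cG.
pose V0 := [set f : {ffun VK -> T} | injectiveb f && [forall u, f (q (inl u)) == inl u]].
have cV0 : #|V0| = M ^_ (#|VK| - #|VG|) by exact: (card_V0 hinj hM).
pose compat (f : {ffun VK -> T}) (s : {ffun 'I_k -> {perm T}}) :=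
  [forall j, forall x, forall y, EK j x y ==> (s j (f x) == f y)].
pose Kf (f : {ffun VK -> T}) j : rel T :=
  fun a b => [exists x, exists y, [&& EK j x y, f x == a & f y == b]].
have mu_eq s : mu EK q s = (\sum_(f in V0) (compat f s : nat))%N.
  rewrite sum_bool /mu; apply: eq_card => f; rewrite !inE.
  rewrite /compat; by case: (injectiveb f); case: [forall j, _]; case: [forall u, _].
have per f : f \in V0 ->
  #|[set s in completions EG n | compat f s]| = (\prod_j (n - kk j)`!)%N.
  rewrite inE => /andP [/injectiveP fi /forallP fh].
  have -> : [set s in completions EG n | compat f s] =
            [set s : {ffun 'I_k -> {perm T}} | [forall j, s j \in ext (Kf f j)]].
    apply/setP => s; rewrite !inE; apply/andP/forallP.
      move=> [_ hc] j; rewrite inE; apply/forallP => a; apply/forallP => b; apply/implyP.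
      move=> /existsP [x /existsP [y /and3P [Exy /eqP <- /eqP <-]]].
      by move/forallP: hc => /(_ j) /forallP /(_ x) /forallP /(_ y) /implyP /(_ Exy).
    move=> h; split.
      apply/forallP => j; apply/forallP => u; apply/forallP => v; apply/implyP => Euv.
      have := h j; rewrite inE => /forallP /(_ (inl u)) /forallP /(_ (inl v)) /implyP; apply.
      apply/existsP; exists (q (inl u)); apply/existsP; exists (q (inl v)).
      by rewrite hmorph // !fh.
    apply/forallP => j; apply/forallP => x; apply/forallP => y; apply/implyP => Exy.
    have := h j; rewrite inE => /forallP /(_ (f x)) /forallP /(_ (f y)) /implyP; apply.
    by apply/existsP; exists x; apply/existsP; exists y; rewrite Exy !eqxx.
  rewrite card_ffam; apply: eq_bigr => j _.
  have pK : pinj (Kf f j).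
    case: (pinjK j) => h1 h2; split.
      move=> a b c /existsP [x /existsP [y /and3P [E1 /eqP hx /eqP hy]]].
      move=> /existsP [x' /existsP [y' /and3P [E2 /eqP hx' /eqP hy']]].
      have xx : x = x' by apply: fi; rewrite hx hx'.
      by rewrite -hy -hy'; rewrite xx in E1; rewrite (h1 _ _ _ E1 E2).
    move=> a b c /existsP [x /existsP [y /and3P [E1 /eqP hx /eqP hy]]].
    move=> /existsP [x' /existsP [y' /and3P [E2 /eqP hx' /eqP hy']]].
    have yy : y = y' by apply: fi; rewrite hy hy'.
    by rewrite -hx -hx'; rewrite yy in E1; rewrite (h2 _ _ _ E1 E2).
  rewrite ext_count // cT; congr (_ - _)`!%N.
  have hi : injective (fun p : VK * VK => (f p.1, f p.2)).
    by move=> [a b] [c d] /= [/fi -> /fi ->].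
  rewrite /kk -(card_imset _ hi); apply: eq_card => -[a b]; rewrite !inE /=.
  apply/existsP/imsetP.
    move=> [x /existsP [y /and3P [E /eqP <- /eqP <-]]].
    by exists (x, y); rewrite ?inE.
  move=> [[x y] hxy [-> ->]]; exists x; apply/existsP; exists y.
  by rewrite !eqxx; move: hxy; rewrite inE /= => ->.
have sumeq : (\sum_(s in completions EG n) mu EK q s = #|V0| * \prod_j (n - kk j)`!)%N.
  rewrite (eq_bigr _ (fun s _ => mu_eq s)) exchange_big /= -sum_nat_const.
  by apply: eq_bigr => f hf; rewrite sum_bool per.
have fe : (\prod_j (n - gg j)`! = \prod_j (n - gg j)^_(kk j - gg j) * \prod_j (n - kk j)`!)%N.
  rewrite -big_split /=; apply: eq_bigr => j _.
  have h1 := gk j; have h2 := kle j.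
  have le : (kk j - gg j <= n - gg j)%N by lia.
  rewrite -(ffact_fact le); congr (_ * _`!)%N; lia.
have p1 : (0 < \prod_j (n - kk j)`!)%N by apply: prodn_gt0 => j; exact: fact_gt0.
have p2 : (0 < \prod_j (n - gg j)^_(kk j - gg j))%N.
  apply: prodn_gt0 => j; rewrite ffact_gt0; have h1 := gk j; have h2 := kle j; lia.
rewrite /expected_mu -natr_sum sumeq cC cV0 fe !natrM -mulf_div divff ?mulr1 //.
by rewrite pnatr_eq0 -lt0n.
Qed.

End Main.

Theorem mainTheorem7 (k : nat) (VG VH VK : finType)
  (EG : 'I_k -> rel VG) (EH : 'I_k -> rel VH) (EK : 'I_k -> rel VK)
  (q : (VG + VH)%type -> VK)
  (hG : is_precover EG) (hH : is_precover EH) (hK : is_precover EK)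
  (hq : is_quotient (sum_rel EG EH) EK q)
  (hinj : injective (fun u => q (inl u))) :
  exists C : rat, exists N : nat, forall n : nat, (N <= n)%N ->
    `| expected_mu EG EK q n - (n%:R : rat) ^ (chi EK - chi EG) |
      <= C * (n%:R : rat) ^ (chi EK - chi EG - 1).
Proof.
have hgk := gk hq hinj; have hkl := kle hK; have hVG := VGle hinj.
set m := (#|VK| - #|VG|)%N.
set e := (\sum_j (kk EK j - gg EG j))%N.
set A := #|VK|.
exists (2 * (m + e)%:R * A%:R), (2 * e * A + A + #|VG| + 1)%N.
move=> n hn.
have hn' : (#|VK| + #|VG| < n)%N by lia.
have chieq : chi EK - chi EG = m%:Z - e%:Z.
  have nE (V : finType) (E : 'I_k -> rel V) : num_edges E = (\sum_j #|pairs (E j)|)%N.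
    by apply: eq_bigr => j _; apply: eq_card => p; rewrite !inE.
  have se : (e + \sum_j gg EG j = \sum_j kk EK j)%N.
    by rewrite /e -big_split /=; apply: eq_bigr => j _; rewrite subnK.
  rewrite /chi !nE -/(kk EK _) -/(gg EG _).
  rewrite /kk /gg in se.
  lia.
rewrite chieq (exp_formula hG hK hq hinj hn').
apply: good_ratio.
- by rewrite ltr0n; lia.
- by [].
- have h : (2 * e * A <= n)%N by lia.
  by rewrite -(ler_nat rat) !natrM in h.
- apply: good_ffact; lia.
- rewrite natr_prod.
  apply: good_prod; [by rewrite ltr0n; lia | by [] |].
  move=> j; have := hgk j; have := hkl j => h1 h2.
  apply: good_ffact; lia.
Qed.
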